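(* There is a universal constant $C>0$ such that the following holds. Let $m\ge2$, $n\ge0$ be integers and $p,q\in[0,1]$ with $mp\ge 64\log m$ and $p\le2/3$. Let $X\sim\mathrm{Binom}(m,p)$ and $Y\sim\mathrm{Binom}(n,q)$ be independent. Then for any $\ell$ with $1\le\ell\le\sqrt{mp\log m}$, \[ \Pr(Y\ge X+\ell)\ge\Pr(Y\ge X)\exp\Big(-C\ell\sqrt{\tfrac{\log m}{mp}}\Big)-2m^{-2}, \] \[ \Pr(Y\ge X-\ell)\le\Pr(Y\ge X)\exp\Big(C\ell\sqrt{\tfrac{\log m}{mp}}\Big)+2m^{-2}. \] *)

(* Defs.v *)
From Stdlib Require Import Reals Lra.
Open Scope R_scope.

Definition binom_pmf (n : nat) (p : R) (k : nat) : R :=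
  C n k * p ^ k * (1 - p) ^ (n - k).

(* For X ~ Binom(m,p), Y ~ Binom(n,q) independent (joint law = product of the
   marginals), prob_Y_ge_X_plus m p n q t = Pr(Y >= X + t), t real. *)
Definition prob_Y_ge_X_plus (m : nat) (p : R) (n : nat) (q : R) (t : R) : R :=
  sum_f_R0 (fun i =>
    sum_f_R0 (fun j =>
      if Rle_dec (INR i + t) (INR j)
      then binom_pmf m p i * binom_pmf n q j else 0) n) m.

(* Main.v *)
Require Import Defs.
From Stdlib Require Import Reals Lra Lia ZArith.
Open Scope R_scope.

Fixpoint ss (f : nat -> R) (n : nat) : R :=
  match n with O => 0 | S k => ss f k + f k end.

Lemma ss_ext f g n : (forall i, (i < n)%nat -> f i = g i) -> ss f n = ss g n.
Proof. induction n; simpl; intros H; auto. rewrite IHn by (intros; apply H; lia). rewrite H by lia. auto. Qed.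

Lemma ss_le f g n : (forall i, (i < n)%nat -> f i <= g i) -> ss f n <= ss g n.
Proof. induction n; simpl; intros H; [lra|]. assert (ss f n <= ss g n) by (apply IHn; intros; apply H; lia). assert (f n <= g n) by (apply H; lia). lra. Qed.

Lemma ss_nonneg f n : (forall i, (i < n)%nat -> 0 <= f i) -> 0 <= ss f n.
Proof. induction n; simpl; intros H; [lra|]. assert (0 <= ss f n) by (apply IHn; intros; apply H; lia). assert (0 <= f n) by (apply H; lia). lra. Qed.

Lemma ss_plus f g n : ss (fun i => f i + g i) n = ss f n + ss g n.
Proof. induction n; simpl; [lra|]. rewrite IHn; ring. Qed.

Lemma ss_scal c f n : ss (fun i => c * f i) n = c * ss f n.
Proof. induction n; simpl; [ring|]. rewrite IHn; ring. Qed.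

Lemma ss_shift f N L : ss f (N + L) = ss f L + ss (fun k => f (k + L)%nat) N.
Proof. induction N; simpl; [ring|]. rewrite IHN. ring. Qed.

Lemma ss_mono_n f a b : (forall i, 0 <= f i) -> (a <= b)%nat -> ss f a <= ss f b.
Proof. intros H Hab. induction Hab; [lra|]. simpl. specialize (H m). lra. Qed.

Lemma ss_extend f m N : (forall i, (m < i)%nat -> f i = 0) -> (S m <= N)%nat -> ss f N = ss f (S m).
Proof. intros H HN. induction HN; auto. change (ss f (S m0)) with (ss f m0 + f m0). rewrite IHHN, (H m0) by lia. ring. Qed.

Lemma sumf_ss f n : sum_f_R0 f n = ss f (S n).
Proof. induction n; simpl; [ring|]. simpl in IHn. rewrite IHn. ring. Qed.

Lemma exp_mono x y : x <= y -> exp x <= exp y.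
Proof. intros [H|H]; [left; apply exp_increasing; auto| subst; lra]. Qed.

Lemma exp_pow x n : exp x ^ n = exp (INR n * x).
Proof. induction n; simpl pow. simpl INR; rewrite Rmult_0_l, exp_0; auto.
rewrite S_INR, IHn, <- exp_plus. f_equal; ring. Qed.

Lemma C_nonneg n k : 0 <= C n k.
Proof. unfold C, Rdiv. apply Rmult_le_pos. left; apply INR_fact_lt_0.
left; apply Rinv_0_lt_compat, Rmult_lt_0_compat; apply INR_fact_lt_0. Qed.

Lemma binom_nonneg n p k : 0 <= p <= 1 -> 0 <= binom_pmf n p k.
Proof. intros Hp. unfold binom_pmf. apply Rmult_le_pos; [apply Rmult_le_pos|];
 try apply pow_le; try lra. apply C_nonneg. Qed.

Lemma binom_sum n q : sum_f_R0 (binom_pmf n q) n = 1.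
Proof. unfold binom_pmf. rewrite <- binomial. replace (q + (1-q)) with 1 by ring. apply pow1. Qed.

Definition at_ (m : nat) (p : R) (i : nat) : R := if Nat.leb i m then binom_pmf m p i else 0.

Lemma at_nonneg m p i : 0 <= p <= 1 -> 0 <= at_ m p i.
Proof. intros. unfold at_. destruct (Nat.leb i m); [apply binom_nonneg; auto| lra]. Qed.

Lemma at_zero m p i : (m < i)%nat -> at_ m p i = 0.
Proof. intros. unfold at_. destruct (Nat.leb i m) eqn:E; auto. apply Nat.leb_le in E; lia. Qed.

Lemma at_in m p i : (i <= m)%nat -> at_ m p i = binom_pmf m p i.
Proof. intros. unfold at_. destruct (Nat.leb i m) eqn:E; auto. apply Nat.leb_nle in E; lia. Qed.

Definition Fy (n : nat) (q x : R) : R :=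
  sum_f_R0 (fun j => if Rle_dec x (INR j) then binom_pmf n q j else 0) n.

Lemma Fy_bounds n q x : 0 <= q <= 1 -> 0 <= Fy n q x <= 1.
Proof. intros Hq. unfold Fy. rewrite sumf_ss. split.
 apply ss_nonneg; intros. destruct Rle_dec; [apply binom_nonneg; auto|lra].
 rewrite <- (binom_sum n q), sumf_ss. apply ss_le; intros. destruct Rle_dec; [lra|apply binom_nonneg; auto]. Qed.

Lemma Fy_mono n q x y : 0 <= q <= 1 -> x <= y -> Fy n q y <= Fy n q x.
Proof. intros Hq Hxy. unfold Fy. apply sum_Rle; intros.
 destruct (Rle_dec y (INR n0)); destruct (Rle_dec x (INR n0)); try lra.
 apply binom_nonneg; auto. Qed.

Lemma P_repr m p n q t N : (S m <= N)%nat ->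
  prob_Y_ge_X_plus m p n q t = ss (fun i => at_ m p i * Fy n q (INR i + t)) N.
Proof. intros HN. unfold prob_Y_ge_X_plus. rewrite sumf_ss.
 rewrite (ss_extend _ m N); [| intros; rewrite at_zero; auto; ring | auto].
 apply ss_ext; intros i Hi. rewrite at_in by lia. unfold Fy. rewrite scal_sum.
 apply sum_eq; intros j _. destruct Rle_dec; ring. Qed.

Lemma ss_zero n : ss (fun _ => 0) n = 0.
Proof. induction n; simpl; [auto|rewrite IHn; ring]. Qed.

Lemma ratio m p s Rr j : 0 < p <= 2/3 -> 0 < INR m * p ->
  0 <= s <= 5/8 * (INR m * p) -> INR m * p + 8 * s <= Rr * (INR m * p) ->
  INR m * p - s <= INR j -> at_ m p (S j) <= Rr * at_ m p j.
Proof.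
  intros Hp Hmu Hs HR Hj. set (mu := INR m * p) in *.
  assert (HR1 : 1 <= Rr).
  { apply Rmult_le_reg_r with mu; lra. }
  destruct (Nat.lt_ge_cases j m) as [Hjm|Hjm].
  - rewrite !at_in by lia. unfold binom_pmf. rewrite pascal_step3 by lia.
    replace ((1-p)^(m-j)) with ((1-p)*(1-p)^(m - S j))
      by (replace (m-j)%nat with (S (m - S j)) by lia; reflexivity).
    rewrite minus_INR, S_INR by lia.
    change (p ^ S j) with (p * p ^ j).
    assert (HA : 0 <= C m j * p ^ j * (1-p)^(m - S j)).
    { apply Rmult_le_pos; [apply Rmult_le_pos|]; try apply pow_le; try lra. apply C_nonneg. }
    assert (Hj0 : 0 <= INR j) by apply pos_INR.
    assert (Hy : 0 < INR j + 1) by lra.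
    assert (Hmm : mu = INR m * p) by reflexivity.
    assert (Step1 : mu + 2 * s <= Rr * (mu - s)).
    { apply Rmult_le_reg_r with mu; [lra|].
      assert (Rr * mu * (mu - s) >= (mu + 8*s) * (mu - s)).
      { apply Rle_ge, Rmult_le_compat_r; lra. }
      nra. }
    assert (Key : (INR m - INR j) * p <= Rr * (1 - p) * (INR j + 1)).
    { assert ((INR m - INR j) * p <= (INR m - mu + s) * p) by (apply Rmult_le_compat_r; lra).
      assert (Rr * (1-p) * (mu - s) <= Rr * (1-p) * (INR j + 1)).
      { apply Rmult_le_compat_l; [apply Rmult_le_pos|]; lra. }
      assert ((1-p) * (mu + 2*s) <= (1-p) * (Rr * (mu - s))) by (apply Rmult_le_compat_l; lra).
      nra. }
    set (A := C m j * p ^ j * (1-p)^(m - S j)) in *.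
    replace ((INR m - INR j) / (INR j + 1) * C m j * (p * p ^ j) * (1 - p) ^ (m - S j))
      with (A * (((INR m - INR j) * p) * / (INR j + 1))) by (unfold A; field; lra).
    replace (Rr * (C m j * p ^ j * ((1 - p) * (1 - p) ^ (m - S j))))
      with (A * ((Rr * (1-p) * (INR j + 1)) * / (INR j + 1))) by (unfold A; field; lra).
    apply Rmult_le_compat_l; auto. apply Rmult_le_compat_r; auto.
    left; apply Rinv_0_lt_compat; lra.
  - rewrite at_zero by lia. apply Rmult_le_pos; [lra| apply at_nonneg; lra].
Qed.

Lemma ratio_iter m p s Rr : 0 < p <= 2/3 -> 0 < INR m * p ->
  0 <= s <= 5/8 * (INR m * p) -> INR m * p + 8 * s <= Rr * (INR m * p) ->
  forall L j, INR m * p - s <= INR j -> at_ m p (j + L) <= Rr ^ L * at_ m p j.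
Proof.
  intros Hp Hmu Hs HR L. induction L; intros j Hj.
  - rewrite Nat.add_0_r. simpl; lra.
  - replace (j + S L)%nat with (S (j + L)) by lia.
    assert (HR1 : 1 <= Rr) by (apply Rmult_le_reg_r with (INR m * p); lra).
    eapply Rle_trans.
    + apply (ratio m p s Rr); auto. rewrite plus_INR. assert (0 <= INR L) by apply pos_INR. lra.
    + simpl pow. rewrite Rmult_assoc. apply Rmult_le_compat_l; [lra|]. apply IHL; auto.
Qed.

Lemma core m p Rr T L N (w : nat -> R) : 0 <= p <= 1 -> 0 <= Rr -> 0 <= T ->
  (forall j, T <= INR j -> at_ m p (j + L) <= Rr ^ L * at_ m p j) ->
  (forall i, 0 <= w i <= 1) -> (L <= N)%nat ->
  ss (fun i => at_ m p i * w i) N <=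
    Rr ^ L * ss (fun k => at_ m p k * w (k + L)%nat) N
    + ss (fun i => if Rlt_dec (INR i) (T + INR L) then at_ m p i else 0) N.
Proof.
  intros Hp HR HT Hrat Hw HN.
  set (h := fun i => if Rlt_dec (INR i) (T + INR L) then 0 else at_ m p i * w i).
  set (bad := fun i => if Rlt_dec (INR i) (T + INR L) then at_ m p i else 0).
  assert (HRL : 0 <= Rr ^ L) by (apply pow_le; auto).
  assert (S1 : ss (fun i => at_ m p i * w i) N <= ss h N + ss bad N).
  { rewrite <- ss_plus. apply ss_le; intros i _. unfold h, bad.
    destruct Rlt_dec; [|lra]. specialize (Hw i). assert (0 <= at_ m p i) by (apply at_nonneg; auto). nra. }
  assert (S2 : ss h N <= Rr ^ L * ss (fun k => at_ m p k * w (k + L)%nat) N).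
  { replace N with ((N - L) + L)%nat at 1 by lia. rewrite ss_shift.
    rewrite (ss_ext h (fun _ => 0)), ss_zero.
    2:{ intros i Hi. unfold h. destruct Rlt_dec; auto. exfalso. apply lt_INR in Hi. lra. }
    rewrite <- ss_scal, Rplus_0_l. eapply Rle_trans.
    - apply (ss_le _ (fun k => Rr ^ L * (at_ m p k * w (k + L)%nat))). intros k _. unfold h.
      assert (0 <= at_ m p k) by (apply at_nonneg; auto). specialize (Hw (k+L)%nat).
      destruct Rlt_dec.
      + apply Rmult_le_pos; auto. apply Rmult_le_pos; lra.
      + rewrite <- Rmult_assoc. apply Rmult_le_compat_r; [lra|]. apply Hrat.
        rewrite plus_INR in n. lra.
    - apply ss_mono_n; [|lia]. intros k.
      assert (0 <= at_ m p k) by (apply at_nonneg; auto). specialize (Hw (k+L)%nat).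
      apply Rmult_le_pos; auto. apply Rmult_le_pos; lra. }
  lra.
Qed.

Lemma y_bound lam : 0 <= lam -> lam - 3/4 * lam^2 <= 1 - exp (- lam).
Proof.
  intros Hl. rewrite exp_Ropp.
  assert (E : exp lam = exp (lam/2) * exp (lam/2)) by (rewrite <- exp_plus; f_equal; field).
  assert (H1 := exp_ineq1_le (lam/2)).
  assert (HD : (1 + lam/2) * (1 + lam/2) <= exp lam) by (rewrite E; apply Rmult_le_compat; lra).
  assert (Hpos := exp_pos lam).
  set (E' := exp lam) in *. set (y := / E').
  assert (Hy : y * E' = 1) by (unfold y; field; lra).
  assert (Hy0 : 0 < y) by (unfold y; apply Rinv_0_lt_compat; lra).
  assert (y * ((1 + lam/2) * (1 + lam/2)) <= 1) by (apply Rle_trans with (y * E'); [apply Rmult_le_compat_l; lra | lra]).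
  assert (Hq : 1 <= (1 + lam/2) * (1 + lam/2) * (1 - lam + 3/4 * lam^2)).
  { replace ((1 + lam/2) * (1 + lam/2) * (1 - lam + 3/4 * lam^2)) with (1 + lam^3/2 + 3/16 * lam^4) by field.
    assert (0 <= lam^3) by (apply pow_le; lra). assert (0 <= lam^4) by (apply pow_le; lra). lra. }
  assert (0 <= 1 - lam + 3/4 * lam^2) by nra.
  nra.
Qed.

Lemma chernoff m p d : 0 < p <= 1 -> 0 < INR m * p -> 0 < d ->
  ss (fun i => if Rle_dec (INR i) (INR m * p - d) then at_ m p i else 0) (S m)
   <= exp (- (d ^ 2) / (3 * (INR m * p))).
Proof.
  intros Hp Hmu Hd. set (mu := INR m * p) in *.
  set (lam := 2 * d / (3 * mu)). set (K := mu - d). set (y := exp (- lam)).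
  assert (Hlam : 0 < lam) by (unfold lam; apply Rdiv_lt_0_compat; lra).
  assert (Hy0 : 0 < y) by apply exp_pos.
  eapply Rle_trans.
  { apply (ss_le _ (fun i => exp (lam * K) * (at_ m p i * y ^ i))). intros i _.
    assert (0 <= at_ m p i) by (apply at_nonneg; lra).
    destruct Rle_dec.
    - unfold y. rewrite exp_pow.
      assert (1 <= exp (lam * K) * exp (INR i * - lam)).
      { rewrite <- exp_plus. assert (0 <= lam * K + INR i * - lam) by nra.
        assert (H2 := exp_ineq1_le (lam * K + INR i * - lam)). lra. }
      nra.
    - apply Rmult_le_pos; [left; apply exp_pos|]. apply Rmult_le_pos; auto. apply pow_le; lra. }
  rewrite ss_scal.
  rewrite <- (ss_ext (fun i => C m i * (p * y) ^ i * (1 - p) ^ (m - i))).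
  2:{ intros i Hi. rewrite at_in by lia. unfold binom_pmf. rewrite Rpow_mult_distr. ring. }
  rewrite <- sumf_ss, <- binomial.
  assert (B1 : 0 <= p * y + (1 - p) <= exp (- (p * (1 - y)))).
  { split. assert (0 <= p*y) by nra. lra. assert (H2 := exp_ineq1_le (- (p * (1-y)))). lra. }
  assert (B2 : (p * y + (1 - p)) ^ m <= exp (INR m * - (p * (1 - y)))).
  { rewrite <- exp_pow. apply pow_incr. auto. }
  assert (B3 := y_bound lam (Rlt_le _ _ Hlam)). fold y in B3.
  assert (Heq : - lam * d + 3/4 * mu * lam ^ 2 = - (d ^ 2) / (3 * mu)) by (unfold lam; field; lra).
  assert (B4 : mu * (lam - 3/4 * lam^2) <= mu * (1 - y)) by (apply Rmult_le_compat_l; lra).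
  eapply Rle_trans.
  { apply Rmult_le_compat_l; [left; apply exp_pos| exact B2]. }
  rewrite <- exp_plus. apply exp_mono.
  replace (INR m * - (p * (1 - y))) with (- (mu * (1 - y))) by (unfold mu; ring).
  unfold K. nra.
Qed.

Theorem proposition3p1 :
  exists Cst : R, 0 < Cst /\
  forall (m n : nat) (p q : R),
    (2 <= m)%nat -> 0 <= p <= 1 -> 0 <= q <= 1 ->
    INR m * p >= 64 * ln (INR m) -> p <= 2 / 3 ->
    forall l : R, 1 <= l <= sqrt (INR m * p * ln (INR m)) ->
      prob_Y_ge_X_plus m p n q l >=
        prob_Y_ge_X_plus m p n q 0
          * exp (- Cst * l * sqrt (ln (INR m) / (INR m * p)))
        - 2 / (INR m ^ 2)
      /\
      prob_Y_ge_X_plus m p n q (- l) <=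
        prob_Y_ge_X_plus m p n q 0
          * exp (Cst * l * sqrt (ln (INR m) / (INR m * p)))
        + 2 / (INR m ^ 2).
Proof.
  exists 80. split; [lra|].
  intros m n p q Hm Hp Hq Hmu Hp23 l Hl.
  assert (Hm2 : 2 <= INR m) by (replace 2 with (INR 2) by (simpl; ring); apply le_INR; auto).
  assert (Hln : 0 < ln (INR m)) by (rewrite <- ln_1; apply ln_increasing; lra).
  set (mu := INR m * p) in *.
  assert (Hmu0 : 0 < mu) by lra.
  assert (Hp0 : 0 < p) by (destruct (Rle_lt_or_eq_dec 0 p (proj1 Hp)) as [H|H]; auto;
                           unfold mu in Hmu0; rewrite <- H in Hmu0; lra).
  set (eps := sqrt (ln (INR m) / mu)).
  assert (Heps0 : 0 <= eps) by apply sqrt_pos.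
  assert (Heps2 : eps * eps = ln (INR m) / mu) by (apply sqrt_sqrt; apply Rlt_le, Rdiv_lt_0_compat; lra).
  assert (Hmue : mu * (eps * eps) = ln (INR m)) by (rewrite Heps2; field; lra).
  assert (Hepsp : 0 < eps) by (destruct Heps0 as [H|H]; auto; rewrite <- H in Hmue; lra).
  assert (Heps8 : eps <= 1/8).
  { assert (eps * eps <= 1/64).
    { rewrite Heps2. apply Rmult_le_reg_r with mu; auto. unfold Rdiv. rewrite Rmult_assoc, Rinv_l; lra. }
    nra. }
  assert (Hlmu : l <= mu * eps).
  { replace (mu * ln (INR m)) with ((mu * eps) ^ 2) in Hl by (rewrite <- Hmue; ring).
    rewrite sqrt_pow2 in Hl; [lra|]. apply Rmult_le_pos; lra. }
  set (L := Z.to_nat (up l)).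
  assert (HL : INR L = IZR (up l)).
  { unfold L. rewrite INR_IZR_INZ, Z2Nat.id; auto. destruct (archimed l).
    apply Z.lt_le_incl. apply lt_IZR. simpl. lra. }
  assert (HLb : l < INR L <= l + 1) by (rewrite HL; destruct (archimed l); lra).
  set (s := 5 * mu * eps). set (T := mu - s). set (Rr := exp (40 * eps)).
  assert (HRr : 1 + 40 * eps <= Rr) by apply exp_ineq1_le.
  assert (Hme : mu * eps <= mu * (1/8)) by (apply Rmult_le_compat_l; lra).
  assert (Hme0 : 0 <= mu * eps) by (apply Rmult_le_pos; lra).
  assert (Hs : 0 <= s <= 5/8 * (INR m * p)) by (fold mu; unfold s; lra).
  assert (HRmu : INR m * p + 8 * s <= Rr * (INR m * p)).
  { fold mu. unfold s. assert ((1 + 40*eps) * mu <= Rr * mu) by (apply Rmult_le_compat_r; lra). lra. }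
  assert (HT : 0 <= T) by (unfold T, s; lra).
  assert (Hrat := ratio_iter m p s Rr (conj Hp0 Hp23) Hmu0 Hs HRmu L).
  set (N := (S m + L)%nat).
  assert (HN1 : (S m <= N)%nat) by (unfold N; lia).
  assert (HN2 : (L <= N)%nat) by (unfold N; lia).
  assert (HRr0 : 0 <= Rr) by lra.
  assert (Hw1 : forall t i, 0 <= Fy n q (INR i + t) <= 1) by (intros; apply Fy_bounds; auto).
  set (B := ss (fun i => if Rlt_dec (INR i) (T + INR L) then at_ m p i else 0) N).
  assert (HB0 : 0 <= B).
  { apply ss_nonneg; intros. destruct Rlt_dec; [apply at_nonneg; auto|lra]. }
  assert (HB : B <= 2 / INR m ^ 2).
  { unfold B. rewrite (ss_extend _ m N); auto.
    2:{ intros i Hi. destruct Rlt_dec; auto. apply at_zero; auto. }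
    set (d := s - INR L).
    assert (Hd : 3 * mu * eps <= d) by (unfold d, s; lra).
    eapply Rle_trans.
    { apply (ss_le _ (fun i => if Rle_dec (INR i) (INR m * p - d) then at_ m p i else 0)).
      intros i _. destruct Rlt_dec; destruct Rle_dec; try lra.
      - exfalso. apply n0. unfold d, T in *. fold mu. lra.
      - apply at_nonneg; auto. }
    eapply Rle_trans.
    { apply chernoff; auto. lra. nra. }
    assert (Hd2 : 9 * mu^2 * (eps*eps) <= d^2) by nra.
    assert (H3 : 3 * ln (INR m) <= d ^ 2 / (3 * mu)).
    { replace (3 * ln (INR m)) with (9 * mu^2 * (eps*eps) / (3 * mu)) by (rewrite <- Hmue; field; lra).
      unfold Rdiv. apply Rmult_le_compat_r; auto. left; apply Rinv_0_lt_compat; lra. }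
    eapply Rle_trans.
    { apply exp_mono. fold mu. unfold Rdiv at 1. rewrite Ropp_mult_distr_l_reverse.
      fold (Rdiv (d^2) (3*mu)). apply Ropp_le_contravar.
      apply Rle_trans with (3 * ln (INR m)); [|exact H3].
      assert (2 * ln (INR m) <= 3 * ln (INR m)) by lra. exact H. }
    rewrite exp_Ropp.
    replace (exp (2 * ln (INR m))) with (INR m ^ 2)
      by (replace (2 * ln (INR m)) with (ln (INR m) + ln (INR m)) by ring;
          rewrite exp_plus, exp_ln by lra; ring).
    assert (0 < / INR m ^ 2) by (apply Rinv_0_lt_compat; nra).
    unfold Rdiv. lra. }
  assert (Hat : forall i, 0 <= at_ m p i) by (intros; apply at_nonneg; auto).
  assert (Pnn : forall t, 0 <= prob_Y_ge_X_plus m p n q t).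
  { intros t. rewrite (P_repr m p n q t N HN1). apply ss_nonneg; intros.
    apply Rmult_le_pos; auto. apply Hw1. }
  assert (HRL : Rr ^ L = exp (40 * eps * INR L)) by (unfold Rr; rewrite exp_pow; f_equal; ring).
  assert (HLl : 40 * eps * INR L <= 80 * l * eps) by nra.
  split.
  -
    assert (Hc := core m p Rr T L N (fun i => Fy n q (INR i + 0)) (proj1 (conj Hp Hp)) HRr0 HT
                   Hrat (Hw1 0) HN2).
    cbv beta in Hc.
    rewrite <- (P_repr m p n q 0 N HN1) in Hc.
    rewrite (ss_ext _ (fun k => at_ m p k * Fy n q (INR k + INR L))) in Hc.
    2:{ intros k _. rewrite plus_INR, Rplus_0_r. auto. }
    rewrite <- (P_repr m p n q (INR L) N HN1) in Hc. fold B in Hc.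
    assert (Hmono : prob_Y_ge_X_plus m p n q (INR L) <= prob_Y_ge_X_plus m p n q l).
    { rewrite !(P_repr m p n q _ N HN1). apply ss_le; intros.
      apply Rmult_le_compat_l; auto. apply Fy_mono; auto. lra. }
    set (E1 := exp (Ropp 80 * l * eps)).
    assert (HE1 : 0 < E1) by apply exp_pos.
    assert (Hle0 : 0 <= l * eps) by (apply Rmult_le_pos; lra).
    assert (HE1b : E1 <= 1) by (rewrite <- exp_0; apply exp_mono; lra).
    assert (HE2 : E1 * Rr ^ L <= 1) by (rewrite HRL; unfold E1; rewrite <- exp_plus, <- exp_0; apply exp_mono; lra).
    set (P0 := prob_Y_ge_X_plus m p n q 0) in *.
    set (PL := prob_Y_ge_X_plus m p n q (INR L)) in *.
    assert (P0 * E1 <= (Rr ^ L * PL + B) * E1) by (apply Rmult_le_compat_r; lra).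
    assert (HPL := Pnn (INR L)). fold PL in HPL.
    assert (E1 * Rr ^ L * PL <= PL) by (apply Rmult_le_reg_r with 1; [lra|]; nra).
    assert (B * E1 <= B) by nra.
    apply Rle_ge. unfold Rdiv in *. lra.
  -
    assert (Hc := core m p Rr T L N (fun i => Fy n q (INR i + - INR L)) (proj1 (conj Hp Hp)) HRr0 HT
                   Hrat (Hw1 (- INR L)) HN2).
    cbv beta in Hc.
    rewrite <- (P_repr m p n q (- INR L) N HN1) in Hc.
    rewrite (ss_ext _ (fun k => at_ m p k * Fy n q (INR k + 0))) in Hc.
    2:{ intros k _. rewrite plus_INR. f_equal. f_equal. ring. }
    rewrite <- (P_repr m p n q 0 N HN1) in Hc. fold B in Hc.
    assert (Hmono : prob_Y_ge_X_plus m p n q (- l) <= prob_Y_ge_X_plus m p n q (- INR L)).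
    { rewrite !(P_repr m p n q _ N HN1). apply ss_le; intros.
      apply Rmult_le_compat_l; auto. apply Fy_mono; auto. lra. }
    assert (HE : Rr ^ L <= exp (80 * l * eps)) by (rewrite HRL; apply exp_mono; lra).
    assert (HP0 := Pnn 0).
    assert (Rr ^ L * prob_Y_ge_X_plus m p n q 0 <= exp (80 * l * eps) * prob_Y_ge_X_plus m p n q 0)
      by (apply Rmult_le_compat_r; auto).
    unfold Rdiv in *. fold eps. lra.
Qed.
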